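(* Let $h(s)$ be a real rational (not necessarily proper) transfer function, and define $(F_N)_{N\in\mathbb{N}}$ recursively by \[ F_{N+1}(s)=\frac{F_N(s)+h(s)}{F_N(s)+h(s)+1},\qquad F_0(s)=0. \] For $z$ in the extended complex plane $\hat{\mathbb{C}}=\mathbb{C}\cup\{\infty\}$ define \[ f(z):=\min_{a>0,\ \omega\in\mathbb{R}\cup\{\infty\}} a\quad\text{subject to}\quad z=\frac{-a^2\omega^2}{-(1-a)\omega^2+2j\omega+1}, \] where $j=\sqrt{-1}$. Then for any $s\in\hat{\mathbb{C}}$ with $h(s)\notin(-4,0)$, \[ \sup_{N\in\mathbb{N}}|F_N(s)|\le f(h(s)). \]
   Context: $(-4,0)$ denotes the open real interval between $-4$ and $0$, viewed as a subset of $\mathbb{C}$. In the constraint defining $f$, the value at $\omega=\infty$ is understood as the limit of the right-hand side as $\omega\to\infty$, and the right-hand side is the value at $s=j\omega$ of $a^2s^2/((1-a)s^2+2s+1)$. *)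

(* Defs.v *)
From HB Require Import structures.
From mathcomp Require Import all_boot all_order all_algebra.
From mathcomp Require Import complex.
Set Implicit Arguments. Unset Strict Implicit. Unset Printing Implicit Defensive.
Import Order.TTheory GRing.Theory Num.Theory.
Local Open Scope ring_scope.

(* The extended complex plane  C^ = C u {oo}: [Some z] is z, [None] is oo. *)
Definition extC (R : rcfType) := option R[i].

(* A rational function over C, given in homogeneous form (n, d), i.e. n/d,
   with (n, d) <> (0, 0).  (d = 0 encodes the constant function oo.)  Its
   value at a point of C^ is computed from the reduced form n'/d' obtained by
   dividing out g = gcd(n, d):
   - at a finite point x: n'(x)/d'(x) if d'(x) <> 0, and oo otherwise;
   - at oo: 0 if deg n' < deg d', lead(n')/lead(d') if the degrees agree,
     and oo if deg n' > deg d'. *)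
Definition rat_eval (R : rcfType) (nd : {poly R[i]} * {poly R[i]})
    (s : extC R) : extC R :=
  let g := gcdp nd.1 nd.2 in
  let n := nd.1 %/ g in
  let d := nd.2 %/ g in
  match s with
  | Some x => if d.[x] != 0 then Some (n.[x] / d.[x]) else None
  | None =>
      if (size n < size d)%N then Some 0
      else if size n == size d then Some (lead_coef n / lead_coef d)
      else None
  end.

Definition cpoly (R : rcfType) (p : {poly R}) : {poly R[i]} :=
  map_poly (real_complex R) p.

(* The sequence F_N for h = p/q (p, q real polynomials, q <> 0):
   F_0 = 0, F_{N+1} = (F_N + h)/(F_N + h + 1), computed in homogeneous form:
   if F_N = n/d then F_N + h = (n q + p d)/(d q) and
   F_{N+1} = (n q + p d) / (n q + p d + d q). *)
Fixpoint Fseq (R : rcfType) (p q : {poly R}) (N : nat)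
    : {poly R[i]} * {poly R[i]} :=
  match N with
  | O => (0, 1)
  | N'.+1 =>
      let nd := Fseq p q N' in
      let A := nd.1 * cpoly q + cpoly p * nd.2 in
      (A, A + nd.2 * cpoly q)
  end.

(* The right-hand side of the constraint in the definition of f:
   the value at s = j*omega of a^2 s^2 / ((1-a) s^2 + 2 s + 1), where for
   omega = oo the value is the limit as omega -> oo (= value of this rational
   function at s = oo). *)
Definition fcurve (R : rcfType) (a : R) (omega : option R) : extC R :=
  rat_eval (((a ^+ 2)%:C)%C *: 'X^2,
            ((1 - a)%:C)%C *: 'X^2 + 2%:R *: 'X + 1)
           (match omega with Some w => Some ((w%:C)%C * 'i%C) | None => None end).

Definition f_feasible (R : rcfType) (z : extC R) (a : R) : Prop :=
  0 < a /\ exists omega : option R, z = fcurve a omega.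

(* |w| <= a for w in C^ (|oo| = +oo is never <= a real number). *)
Definition extC_norm_le (R : rcfType) (w : extC R) (a : R) : Prop :=
  match w with
  | Some x => ComplexField.Normc.normc x <= a
  | None => False
  end.

Definition in_m4_0 (R : rcfType) (w : extC R) : Prop :=
  exists r : R, -4 < r < 0 /\ w = Some ((r%:C)%C).

(* Main.v *)
Require Import Defs.
From HB Require Import structures.
From mathcomp Require Import all_boot all_order all_algebra.
From mathcomp Require Import complex.
From mathcomp Require Import ring lra zify.
Import Order.TTheory GRing.Theory Num.Theory.
Local Open Scope ring_scope.

(* Proof idea: for z = h(s) on the curve C_a one has
   z = a^2 / (rho^2 - a) with Re rho = 1; the closed disk through 0 with
   diameter a in direction conj(rho) is invariant under F -> (F+z)/(F+z+1),
   which is encoded by the Hermitian form Jf below. *)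

Module Aux.
Set Implicit Arguments. Unset Strict Implicit. Unset Printing Implicit Defensive.
Local Open Scope complex_scope.
Local Notation Rp := complex.Re.
Local Notation Ip := complex.Im.
Section Core.
Variable R : rcfType.

Definition Jf (a v r : R) (n d : R[i]) : R :=
  r * (Rp n ^+ 2 + Ip n ^+ 2)
  - a * (Rp n * Rp d + Ip n * Ip d - v * (Ip n * Rp d - Rp n * Ip d)).

Definition n2 (c : R[i]) : R := Rp c ^+ 2 + Ip c ^+ 2.

Lemma n2_ge0 c : 0 <= n2 c.
Proof. by rewrite /n2 addr_ge0 ?sqr_ge0. Qed.

Lemma n2_gt0 c : c != 0 -> 0 < n2 c.
Proof.
case: c => c1 c2; rewrite eq_complex /= negb_and /n2 /= => /orP [h|h].
  by rewrite ltr_pwDl ?sqr_ge0 // exprn_even_gt0.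
by rewrite ltr_pwDr ?sqr_ge0 // exprn_even_gt0.
Qed.

Lemma J_scale a v r (c n d : R[i]) : Jf a v r (c * n) (c * d) = n2 c * Jf a v r n d.
Proof. case: c => c1 c2; case: n => x1 x2; case: d => y1 y2; rewrite /Jf /n2 /=. ring. Qed.

Lemma J_key a v r (n d : R[i]) : r ^+ 2 = 1 + v ^+ 2 ->
  let D0 := (1 +i* v) ^+ 2 - a%:C in
  let X := D0 * n + (a ^+ 2)%:C * d in
  Jf a v r X (X + D0 * d) = n2 D0 * Jf a v r n d
    - (a * ((Rp X - r * a * Rp d) ^+ 2 + (Ip X - r * a * Ip d) ^+ 2)
       + a ^+ 4 * (r - 1) * n2 d).
Proof.
move=> hr D0 X.
have -> : Jf a v r X (X + D0 * d) = n2 D0 * Jf a v r n d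
    - (a * ((Rp X - r * a * Rp d) ^+ 2 + (Ip X - r * a * Ip d) ^+ 2)
       + a ^+ 4 * (r - 1) * n2 d) + a ^+ 3 * n2 d * (r ^+ 2 - 1 - v ^+ 2).
  rewrite /X /D0; clear X D0; case: n => x1 x2; case: d => y1 y2; rewrite /Jf /n2 /=. ring.
by rewrite hr; ring.
Qed.

Lemma inv_step a v r (pi ka n d : R[i]) : 0 < a -> 1 <= r -> r ^+ 2 = 1 + v ^+ 2 ->
  let D0 := (1 +i* v) ^+ 2 - a%:C in
  D0 != 0 -> pi * D0 = (a ^+ 2)%:C * ka ->
  Jf a v r n d <= 0 ->
  Jf a v r (n * ka + pi * d) (n * ka + pi * d + d * ka) <= 0.
Proof.
move=> a0 r1 hr D0 D0n hrel hJ.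
set X := D0 * n + (a ^+ 2)%:C * d.
have e1 : D0 * (n * ka + pi * d) = ka * X.
  apply/eqP; rewrite -subr_eq0; apply/eqP.
  have -> : D0 * (n * ka + pi * d) - ka * X = d * (pi * D0 - (a ^+ 2)%:C * ka)
    by rewrite /X; ring.
  by rewrite hrel subrr mulr0.
have e2 : D0 * (n * ka + pi * d + d * ka) = ka * (X + D0 * d).
  by rewrite mulrDr e1; ring.
have hk := @J_key a v r n d hr.
rewrite -/D0 -/X in hk.
have : n2 D0 * Jf a v r (n * ka + pi * d) (n * ka + pi * d + d * ka) <= 0.
  rewrite -J_scale e1 e2 J_scale hk.
  apply: mulr_ge0_le0; first exact: n2_ge0.
  rewrite subr_le0; apply: le_trans (_ : 0 <= _).
    by apply: mulr_ge0_le0 => //; exact: n2_ge0.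
  apply: addr_ge0.
    by apply: mulr_ge0; [exact: ltW | rewrite addr_ge0 ?sqr_ge0].
  apply: mulr_ge0; last exact: n2_ge0.
  by apply: mulr_ge0; [rewrite exprn_ge0 ?ltW | rewrite subr_ge0].
by rewrite pmulr_rle0 // n2_gt0.
Qed.

Lemma final_bound a v r (n d : R[i]) : 0 < a -> 1 <= r -> r ^+ 2 = 1 + v ^+ 2 ->
  Jf a v r n d <= 0 -> (n != 0) || (d != 0) ->
  d != 0 /\ ComplexField.Normc.normc (n / d) <= a.
Proof.
move=> a0 r1 hr hJ hnz.
have dn0 : d != 0.
  apply/negP => /eqP d0; move: hJ hnz; rewrite d0 eqxx orbF => hJ nn0.
  have e : Jf a v r n 0 = r * n2 n by rewrite /Jf /n2 /=; ring.
  rewrite e in hJ.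
  have : 0 < r * n2 n by rewrite mulr_gt0 ?n2_gt0 // (lt_le_trans ltr01).
  by rewrite ltNge hJ.
split => //.
have hn : n = d * (n / d) by rewrite mulrC divfK.
move: (n / d) hn => q hn.
have hd : d = d * 1 by rewrite mulr1.
move: hJ; rewrite hn {2}hd J_scale pmulr_rle0 ?n2_gt0 //.
clear hn hd hnz.
case: q => q1 q2; rewrite /Jf /= => hJ.
set s := q1 ^+ 2 + q2 ^+ 2.
have s0 : 0 <= s by rewrite addr_ge0 ?sqr_ge0.
set L := q1 * 1 + q2 * 0 - v * (q2 * 1 - q1 * 0).
have hL : L = q1 - v * q2 by rewrite /L; ring.
have hJ' : r * s <= a * L by rewrite -subr_le0.
have CS : L ^+ 2 <= r ^+ 2 * s.
  rewrite hr hL /s -subr_ge0.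
  have -> : (1 + v ^+ 2) * (q1 ^+ 2 + q2 ^+ 2) - (q1 - v * q2) ^+ 2 = (v * q1 + q2) ^+ 2 by ring.
  exact: sqr_ge0.
have sa : s <= a ^+ 2.
  have [s_eq0|s_gt0] := eqVneq s 0; first by rewrite s_eq0 sqr_ge0.
  have spos : 0 < s by rewrite lt_def s_gt0 s0.
  have rpos : 0 < r by apply: lt_le_trans r1.
  have rs0 : 0 <= r * s by rewrite mulr_ge0 // ltW.
  have h1 : (r * s) ^+ 2 <= (a * L) ^+ 2.
    by rewrite ler_sqr ?nnegrE // (le_trans rs0 hJ').
  have h2 : (r * s) ^+ 2 <= a ^+ 2 * (r ^+ 2 * s).
    by apply: le_trans h1 _; rewrite exprMn ler_wpM2l ?sqr_ge0.
  have : (r ^+ 2 * s) * s <= (r ^+ 2 * s) * a ^+ 2.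
    have e1 : (r * s) ^+ 2 = (r ^+ 2 * s) * s by ring.
    have e2 : a ^+ 2 * (r ^+ 2 * s) = (r ^+ 2 * s) * a ^+ 2 by ring.
    by rewrite -e1 -e2.
  by rewrite ler_pM2l // mulr_gt0 // exprn_gt0.
rewrite -(ger0_norm (ltW a0)) -sqrtr_sqr.
exact: ler_wsqrtr.
Qed.

End Core.

Section Iter.
Variable R : rcfType.

Fixpoint vseq (pi ka : R[i]) (N : nat) : R[i] * R[i] :=
  match N with
  | O => (0, 1)
  | N'.+1 => let v := vseq pi ka N' in
      (v.1 * ka + pi * v.2, v.1 * ka + pi * v.2 + v.2 * ka)
  end.

Lemma core_gen (a v : R) (pi ka : R[i]) : 0 < a -> ka != 0 ->
  (1 +i* v) ^+ 2 - a%:C != 0 -> pi * ((1 +i* v) ^+ 2 - a%:C) = (a ^+ 2)%:C * ka ->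
  forall N, (vseq pi ka N).2 != 0 /\
    ComplexField.Normc.normc ((vseq pi ka N).1 / (vseq pi ka N).2) <= a.
Proof.
move=> a0 k0 D0n hrel N.
set r := Num.sqrt (1 + v ^+ 2).
have hr : r ^+ 2 = 1 + v ^+ 2 by rewrite sqr_sqrtr // addr_ge0 ?sqr_ge0.
have r1 : 1 <= r by rewrite -sqrtr1 ler_wsqrtr // lerDl sqr_ge0.
have : Jf a v r (vseq pi ka N).1 (vseq pi ka N).2 <= 0 /\
       (((vseq pi ka N).1 != 0) || ((vseq pi ka N).2 != 0)).
  elim: N => [|N] /=.
    split; last by rewrite oner_eq0 orbT.
    have -> : Jf a v r 0 1 = 0 by rewrite /Jf /=; ring.
    by [].
  case: (vseq pi ka N) => n d /= [IH1 IH2].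
  split; first exact: inv_step.
  move: IH2; apply: contraTT; rewrite !negb_or !negbK => /andP [/eqP h1 /eqP h2].
  move: h2; rewrite h1 add0r => /eqP; rewrite mulf_eq0 (negbTE k0) orbF => /eqP d0.
  move: h1; rewrite d0 mulr0 addr0 => /eqP; rewrite mulf_eq0 (negbTE k0) orbF => ->.
  by rewrite ?eqxx.
by case=> hJ hnz; apply: final_bound hr hJ hnz.
Qed.

Lemma vseq_pi0 (ka : R[i]) N : vseq 0 ka N = (0, ka ^+ N).
Proof. by elim: N => [|N IH] //=; rewrite IH /= !mul0r !add0r exprSr. Qed.

Lemma vseq_ka0 (pi : R[i]) N : vseq pi 0 N = (if N is O then 0 else pi ^+ N, pi ^+ N).
Proof.
elim: N => [|N IH] //=; rewrite IH /= !mulr0 !add0r !addr0 exprS mulrC //.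
Qed.

End Iter.

Section Rat.
Variable R : rcfType.
Local Notation C := (R[i]).

Definition val2 (al be : C) : extC R := if be != 0 then Some (al / be) else None.

Lemma prop_val2 (al be al' be' : C) : al * be' = be * al' ->
  (al != 0) || (be != 0) -> (al' != 0) || (be' != 0) -> val2 al be = val2 al' be'.
Proof.
rewrite /val2 => e h h'.
have [b0|b0] := eqVneq be 0.
  have be'0 : be' = 0.
    move: e h; rewrite b0 mul0r eqxx orbF => /eqP; rewrite mulf_eq0.
    by case/orP => /eqP -> //; rewrite eqxx.
  by rewrite b0 be'0 eqxx.
have [b'0|b'0] := eqVneq be' 0.
  have al'0 : al' = 0.
    move: e h'; rewrite b'0 mulr0 eqxx orbF => /esym/eqP.
    by rewrite mulf_eq0 (negbTE b0) /= => /eqP.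
  by move: h'; rewrite al'0 b'0 eqxx.
by congr Some; apply/eqP; rewrite eqr_div // e mulrC.
Qed.

Lemma red_mull (n d : {poly C}) : n = (n %/ gcdp n d) * gcdp n d.
Proof. by rewrite divpK // dvdp_gcdl. Qed.
Lemma red_mulr (n d : {poly C}) : d = (d %/ gcdp n d) * gcdp n d.
Proof. by rewrite divpK // dvdp_gcdr. Qed.

Lemma red_nz (n d : {poly C}) x : (n != 0) || (d != 0) ->
  ((n %/ gcdp n d).[x] != 0) || ((d %/ gcdp n d).[x] != 0).
Proof.
move/coprimep_div_gcd => cop.
have [h|h] := eqVneq (n %/ gcdp n d).[x] 0; last by [].
by rewrite /= (coprimep_root cop) //; apply/eqP.
Qed.

Lemma nz_of_val (n d : {poly C}) x : (n.[x] != 0) || (d.[x] != 0) -> (n != 0) || (d != 0).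
Proof.
by case/orP => h; apply/orP; [left|right]; apply: contraNneq h => ->; rewrite horner0.
Qed.

Lemma E2 (n d : {poly C}) x : (n.[x] != 0) || (d.[x] != 0) ->
  rat_eval (n, d) (Some x) = val2 n.[x] d.[x].
Proof.
move=> h; have nz := nz_of_val h.
rewrite /rat_eval /=; apply: (prop_val2 _ (red_nz x nz) h).
have hn := red_mull n d; have hd := red_mulr n d.
set g := gcdp n d in hn hd *.
set n' := n %/ g in hn *; set d' := d %/ g in hd *.
rewrite [in X in _ = _ * X]hn [in X in _ * X = _]hd !hornerM; ring.
Qed.

Lemma E (n d n1 d1 : {poly C}) x : n * d1 = d * n1 ->
  (n != 0) || (d != 0) -> (n1 != 0) || (d1 != 0) ->
  rat_eval (n, d) (Some x) = rat_eval (n1, d1) (Some x).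
Proof.
move=> e nz nz1; rewrite /rat_eval /=.
apply: prop_val2 (red_nz x nz) (red_nz x nz1).
have hn := red_mull n d; have hd := red_mulr n d.
have hn1 := red_mull n1 d1; have hd1 := red_mulr n1 d1.
set g := gcdp n d in hn hd *; set g1 := gcdp n1 d1 in hn1 hd1 *.
set n' := n %/ g in hn *; set d' := d %/ g in hd *.
set n1' := n1 %/ g1 in hn1 *; set d1' := d1 %/ g1 in hd1 *.
have g0 : g != 0 by rewrite /g gcdp_eq0 negb_and.
have g10 : g1 != 0 by rewrite /g1 gcdp_eq0 negb_and.
have : (n' * d1' - d' * n1') * (g * g1) = 0.
  have -> : (n' * d1' - d' * n1') * (g * g1) = (n' * g) * (d1' * g1) - (d' * g) * (n1' * g1)
    by ring.
  by rewrite -hn -hd -hn1 -hd1 e subrr.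
move/eqP; rewrite mulf_eq0 mulf_eq0 (negbTE g0) (negbTE g10) !orbF subr_eq0 => /eqP e'.
by rewrite -!hornerM e'.
Qed.

Definition ifchain (u w : {poly C}) : extC R :=
  if (size u < size w)%N then Some 0
  else if size u == size w then Some (lead_coef u / lead_coef w) else None.

Lemma coefK_nz (u : {poly C}) K : (size u <= K.+1)%N -> (u`_K != 0) = (size u == K.+1).
Proof.
move=> hs; have [e|ne] := eqVneq (size u) K.+1.
  have : lead_coef u != 0.
    by rewrite lead_coef_eq0 -size_poly_gt0 e.
  by rewrite lead_coefE e.
have hs' : (size u <= K)%N by rewrite -ltnS ltn_neqAle ne hs.
by rewrite nth_default // eqxx.
Qed.

Lemma IC (u w : {poly C}) K : (size u <= K.+1)%N -> (size w <= K.+1)%N ->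
  (u`_K != 0) || (w`_K != 0) -> ifchain u w = val2 u`_K w`_K.
Proof.
move=> hu hw; rewrite /ifchain /val2.
have cu := coefK_nz hu; have cw := coefK_nz hw.
rewrite cu cw.
have [eu|neu] := eqVneq (size u) K.+1; have [ew|new] := eqVneq (size w) K.+1 => //= _.
- by rewrite eu ew ltnn eqxx !lead_coefE eu ew.
- have hw' : (size w <= K)%N by rewrite -ltnS ltn_neqAle new hw.
  rewrite eu ltnNge (leq_trans hw' (leqnSn _)) /=.
  by rewrite eq_sym (negbTE (_ : size w != K.+1)) // new.
- have hu' : (size u <= K)%N by rewrite -ltnS ltn_neqAle neu hu.
  rewrite ew ltnS hu' /= nth_default // mul0r.
  by [].
Qed.

Lemma PC (p q : {poly C}) i j : (size p <= i.+1)%N -> (size q <= j.+1)%N ->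
  (p * q)`_(i + j) = p`_i * q`_j.
Proof.
move=> hp hq; rewrite coefM.
have hi : (i < (i + j).+1)%N by rewrite ltnS leq_addr.
rewrite (bigD1 (Ordinal hi)) //= addKn big1 ?addr0 // => k hk.
have [lt|ge] := ltnP i k.
  by rewrite (nth_default 0 (leq_trans hp lt)) mul0r.
have ne : (k : nat) != i by apply: contraNneq hk => e; apply/eqP/val_inj.
have lt : (k < i)%N by rewrite ltn_neqAle ne ge.
have : (j.+1 <= i + j - k)%N.
  have kl : (k <= i + j)%N by rewrite (leq_trans ge) // leq_addr.
  by rewrite ltn_subRL -addSn leq_add2r.
by move=> h; rewrite (nth_default 0 (leq_trans hq h)) mulr0.
Qed.

Lemma INF (n d : {poly C}) K : (size n <= K.+1)%N -> (size d <= K.+1)%N ->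
  (n`_K != 0) || (d`_K != 0) -> rat_eval (n, d) None = val2 n`_K d`_K.
Proof.
move=> hn hd hnz.
have nz : (n != 0) || (d != 0).
  by case/orP: hnz => h; apply/orP; [left|right]; apply: contraNneq h => ->; rewrite coef0.
have en := red_mull n d; have ed := red_mulr n d.
rewrite /rat_eval /=.
set g := gcdp n d in en ed *.
set n' := n %/ g in en *; set d' := d %/ g in ed *.
change (ifchain n' d' = val2 n`_K d`_K).
have g0 : g != 0 by rewrite /g gcdp_eq0 negb_and.
set m := (size g).-1.
have sg : size g = m.+1 by rewrite /m prednK // size_poly_gt0.
have mK : (m <= K)%N.
  case/orP: nz => h.
    by have := leq_gcdpl d h; rewrite -/g sg => /leq_trans/(_ hn); rewrite ltnS.
  by have := leq_gcdpr n h; rewrite -/g sg => /leq_trans/(_ hd); rewrite ltnS.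
set K' := (K - m)%N.
have KK : K = (K' + m)%N by rewrite /K' subnK.
have sz : forall u : {poly C}, (size (u * g)%R <= K.+1)%N -> (size u <= K'.+1)%N.
  move=> u hu; have [u0|u0] := eqVneq u 0; first by rewrite u0 size_poly0.
  by move: hu; rewrite size_mul // sg addnS /= {1}KK -addSn leq_add2r.
have hn' : (size n' <= K'.+1)%N by apply: sz; rewrite -en.
have hd' : (size d' <= K'.+1)%N by apply: sz; rewrite -ed.
have cn : n`_K = n'`_K' * g`_m by rewrite en KK PC // sg.
have cd : d`_K = d'`_K' * g`_m by rewrite ed KK PC // sg.
have lg : g`_m != 0 by rewrite /m -lead_coefE lead_coef_eq0.
have nz' : (n'`_K' != 0) || (d'`_K' != 0).
  by move: hnz; rewrite cn cd !mulf_eq0 (negbTE lg) !orbF.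
rewrite (IC hn' hd' nz'); apply: (prop_val2 _ nz' hnz).
by rewrite cn cd; ring.
Qed.

Fixpoint Hseq (P Q : {poly C}) (N : nat) : {poly C} * {poly C} :=
  match N with
  | O => (0, 1)
  | N'.+1 => let nd := Hseq P Q N' in
      let A := nd.1 * Q + P * nd.2 in (A, A + nd.2 * Q)
  end.

Lemma Fseq_H (p q : {poly R}) N : Fseq p q N = Hseq (cpoly p) (cpoly q) N.
Proof. by elim: N => [|N IH] //=; rewrite IH. Qed.

Lemma H_factor (P Q P0 Q0 g : {poly C}) N : P = P0 * g -> Q = Q0 * g ->
  Hseq P Q N = (g ^+ N * (Hseq P0 Q0 N).1, g ^+ N * (Hseq P0 Q0 N).2).
Proof.
move=> eP eQ; elim: N => [|N IH] /=; first by rewrite !expr0 !mul1r.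
rewrite IH /= eP eQ exprS; congr pair; ring.
Qed.

Lemma H_eval (P Q : {poly C}) x N :
  ((Hseq P Q N).1.[x], (Hseq P Q N).2.[x]) = vseq P.[x] Q.[x] N.
Proof.
elim: N => [|N IH] /=; first by rewrite horner0 hornerC.
by rewrite -IH /= !hornerD !hornerM.
Qed.

Lemma H_top (P Q : {poly C}) e N : (size P <= e.+1)%N -> (size Q <= e.+1)%N ->
  [/\ (size (Hseq P Q N).1 <= (N * e).+1)%N, (size (Hseq P Q N).2 <= (N * e).+1)%N &
   ((Hseq P Q N).1`_(N * e), (Hseq P Q N).2`_(N * e)) = vseq P`_e Q`_e N].
Proof.
move=> hP hQ; elim: N => [|N [h1 h2 h3]] /=.
  by rewrite size_poly0 size_poly1 coef0 coef1.
have s1 : forall u v : {poly C}, (size u <= (N * e).+1)%N -> (size v <= e.+1)%N ->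
    (size (u * v)%R <= (N.+1 * e).+1)%N.
  move=> u v hu hv; apply: leq_trans (size_polyMleq _ _) _.
  rewrite mulSn; lia.
have s2 : forall u v : {poly C}, (size u <= (N * e).+1)%N -> (size v <= e.+1)%N ->
    (size (v * u)%R <= (N.+1 * e).+1)%N.
  by move=> u v hu hv; rewrite mulrC; apply: s1.
have sA : (size ((Hseq P Q N).1 * Q + P * (Hseq P Q N).2)%R <= (N.+1 * e).+1)%N.
  by apply: leq_trans (size_polyD _ _) _; rewrite geq_max s1 ?s2.
split => //.
  by apply: leq_trans (size_polyD _ _) _; rewrite geq_max sA s1.
rewrite -h3 /= !coefD.
have k1 : (N.+1 * e = N * e + e)%N by rewrite mulSn addnC.
have k2 : (N.+1 * e = e + N * e)%N by rewrite mulSn.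
rewrite {1 3 5}k1 {1 2}k2 !PC //.
Qed.

End Rat.

Section Feas.
Variable R : rcfType.
Local Notation C := (R[i]).

Definition NaP (a : R) : {poly C} := ((a ^+ 2)%:C)%C *: 'X^2.
Definition DaP (a : R) : {poly C} := ((1 - a)%:C)%C *: 'X^2 + 2%:R *: 'X + 1.

Lemma fcurveE a om : fcurve a om =
  rat_eval (NaP a, DaP a) (match om with Some w => Some ((w%:C)%C * 'i%C) | None => None end).
Proof. by []. Qed.

Lemma Da_eval (a w : R) :
  (DaP a).[(w%:C)%C * 'i%C] = Complex (1 - (1 - a) * w ^+ 2) (2 * w).
Proof.
rewrite /DaP !hornerE /=.
apply/eqP; rewrite eq_complex /=; apply/andP; split; apply/eqP; ring.
Qed.

Lemma Na_eval (a : R) x : (NaP a).[x] = (a ^+ 2)%:C%C * x ^+ 2.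
Proof. by rewrite /NaP !hornerE. Qed.

Lemma Da_nz (a w : R) : (DaP a).[(w%:C)%C * 'i%C] != 0.
Proof.
rewrite Da_eval; apply/negP => /eqP h.
have h2 : 2 * w = 0 by move: h => [].
have w0 : w = 0 by move/eqP: h2; rewrite mulf_eq0 pnatr_eq0 /= => /eqP.
by move: h => []; rewrite w0 expr0n /= mulr0 subr0 => /eqP; rewrite oner_eq0.
Qed.

Lemma fc_some (a w : R) : fcurve a (Some w) =
  Some ((NaP a).[(w%:C)%C * 'i%C] / (DaP a).[(w%:C)%C * 'i%C]).
Proof.
rewrite fcurveE E2; last by rewrite Da_nz orbT.
by rewrite /val2 Da_nz.
Qed.

Lemma fc_none (a : R) : 0 < a -> fcurve a None = val2 ((a ^+ 2)%:C)%C ((1 - a)%:C)%C.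
Proof.
move=> a0; rewrite fcurveE (@INF _ _ _ 2).
- by rewrite /NaP /DaP !coefE /=; congr val2; rewrite ?mulr1 ?mulr0 ?addr0.
- by rewrite /NaP; apply: leq_trans (size_scale_leq _ _) _; rewrite size_polyXn.
- rewrite /DaP; apply: leq_trans (size_polyD _ _) _; rewrite geq_max size_poly1 andbT.
  apply: leq_trans (size_polyD _ _) _; rewrite geq_max.
  apply/andP; split; apply: leq_trans (size_scale_leq _ _) _.
    by rewrite size_polyXn.
  by rewrite size_polyX.
- rewrite /NaP coefZ coefXn eqxx mulr1; apply/orP; left.
  by rewrite eq_complex /= negb_and expf_neq0 // gt_eqF.
Qed.

End Feas.

Section Main.
Variable R : rcfType.
Local Notation C := (R[i]).

Lemma core_all (pi ka : C) (a : R) : (pi != 0) || (ka != 0) ->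
  f_feasible (val2 pi ka) a -> forall N, (vseq pi ka N).2 != 0 /\
    ComplexField.Normc.normc ((vseq pi ka N).1 / (vseq pi ka N).2) <= a.
Proof.
move=> nz [a0 [om hom]] N.
have [k0|k0] := eqVneq ka 0.
  have p0 : pi != 0 by move: nz; rewrite k0 eqxx orbF.
  have a1 : a = 1.
    move: hom; rewrite /val2 k0 eqxx /=.
    case: om => [w|]; first by rewrite fc_some.
    rewrite fc_none // /val2.
    case: eqP => [e|//] _.
    by move: e => [] /eqP; rewrite subr_eq0 => /eqP <-.
  case: N => [|N].
    have -> : (vseq pi ka 0).1 = 0 by [].
    have -> : (vseq pi ka 0).2 = 1 by [].
    by rewrite oner_eq0 mul0r ComplexField.Normc.normc0 ltW.
  have [-> ->] : (vseq pi ka N.+1).1 = pi ^+ N.+1 /\ (vseq pi ka N.+1).2 = pi ^+ N.+1.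
    by rewrite k0 vseq_ka0.
  by rewrite expf_neq0 // divff ?expf_neq0 // ComplexField.Normc.normc1 a1.
have [p0|p0] := eqVneq pi 0.
  have [-> ->] : (vseq pi ka N).1 = 0 /\ (vseq pi ka N).2 = ka ^+ N.
    by rewrite p0 vseq_pi0.
  by rewrite expf_neq0 // mul0r ComplexField.Normc.normc0 ltW.
move: hom; rewrite /val2 k0 /=.
case: om => [w|] hom.
  move: hom; rewrite fc_some => -[hom].
  set x := ((w%:C)%C * 'i%C) in hom.
  have hNa := Na_eval a x.
  have Dnz := Da_nz a w; rewrite -/x in Dnz.
  have w0 : w != 0.
    apply: contraNneq p0 => w0.
    have x0 : x = 0 by rewrite /x w0 mul0r.
    move: hom; rewrite hNa x0 expr0n /= mulr0 mul0r => /eqP.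
    by rewrite mulf_eq0 invr_eq0 (negbTE k0) orbF => /eqP ->.
  have x0 : x != 0.
    apply/negP => /eqP; rewrite /x => /eqP; rewrite eq_complex /= => /andP [_].
    by rewrite mulr1 mul0r addr0 (negbTE w0).
  set v := - w^-1.
  have hxr : x * (1 +i* v) = x + 1.
    rewrite /x /v; apply/eqP; rewrite eq_complex /=; apply/andP; split; apply/eqP.
      by field.
    by ring.
  set D0 := (1 +i* v) ^+ 2 - a%:C.
  have hDa : (DaP a).[x] = x ^+ 2 * D0.
    rewrite Da_eval /x /D0 /v; apply/eqP; rewrite eq_complex /=.
    by apply/andP; split; apply/eqP; field.
  have D0n : D0 != 0 by move: Dnz; rewrite hDa mulf_eq0 negb_or => /andP [].
  have x2 : x ^+ 2 != 0 by rewrite expf_neq0.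
  have hrel : pi * D0 = (a ^+ 2)%:C * ka.
    have xD : x ^+ 2 * D0 != 0 by rewrite mulf_neq0.
    move/eqP: hom; rewrite hNa hDa eqr_div // => /eqP e.
    apply: (mulIf x2); rewrite -mulrA (mulrC D0) e.
    by rewrite mulrAC.
  exact: core_gen a0 k0 D0n hrel N.
move: hom; rewrite fc_none // /val2.
case: eqP => [//|ne] [hom].
have e : (1 +i* 0) ^+ 2 - a%:C = (1 - a)%:C :> C.
  by apply/eqP; rewrite eq_complex /=; apply/andP; split; apply/eqP; ring.
have D0n : (1 +i* 0) ^+ 2 - a%:C != 0 :> C by rewrite e; apply/eqP.
have hrel : pi * ((1 +i* 0) ^+ 2 - a%:C) = (a ^+ 2)%:C * ka.
  move/eqP: hom; rewrite eqr_div //; last by apply/eqP.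
  by rewrite e => /eqP ->; rewrite mulrC.
exact: core_gen a0 k0 D0n hrel N.
Qed.

End Main.
End Aux.
Import Aux.

Theorem corollary1 (R : rcfType) (p q : {poly R}) (s : extC R) :
  q != 0 ->
  ~ in_m4_0 (rat_eval (cpoly p, cpoly q) s) ->
  forall (N : nat) (a : R),
    f_feasible (rat_eval (cpoly p, cpoly q) s) a ->
    extC_norm_le (rat_eval (Fseq p q N) s) a.
Proof.
move=> q0 _ N a hfeas.
rewrite Fseq_H.
move: hfeas.
set P := cpoly p; set Q := cpoly q.
have Q0 : Q != 0 by rewrite /Q /cpoly map_poly_eq0.
have nzPQ : (P != 0) || (Q != 0) by rewrite Q0 orbT.
case: s => [x|] hfeas.
  have hP := red_mull P Q; have hQ := red_mulr P Q.
  have {}hfeas : f_feasible (val2 (P %/ gcdp P Q).[x] (Q %/ gcdp P Q).[x]) a by exact: hfeas.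
  have nz := red_nz x nzPQ.
  have [d0 hb] := core_all nz hfeas N.
  rewrite (H_factor N hP hQ).
  have hev := H_eval (P %/ gcdp P Q) (Q %/ gcdp P Q) x N.
  move: hev d0 hb.
  set Gn := (Hseq _ _ N).1; set Gd := (Hseq _ _ N).2.
  move=> <- d0 hb; rewrite /= in d0 hb.
  have Gd0 : Gd != 0 by apply: contraNneq d0 => ->; rewrite horner0.
  set g := gcdp P Q.
  have g0 : g != 0 by rewrite /g gcdp_eq0 negb_and.
  rewrite (@E _ _ _ Gn Gd).
  - by rewrite E2 ?d0 ?orbT // /val2 d0; exact: hb.
  - by rewrite mulrAC.
  - by apply/orP; right; rewrite mulf_neq0 ?expf_neq0.
  - by rewrite Gd0 orbT.
set e := (maxn (size P) (size Q)).-1.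
have me : maxn (size P) (size Q) = e.+1.
  by rewrite /e prednK // leq_max !size_poly_gt0 Q0 orbT.
have hP : (size P <= e.+1)%N by rewrite -me leq_maxl.
have hQ : (size Q <= e.+1)%N by rewrite -me leq_maxr.
have nzc : (P`_e != 0) || (Q`_e != 0).
  case: (leqP (size P) (size Q)) => h.
    by apply/orP; right; rewrite (coefK_nz hQ) -me (maxn_idPr h).
  by apply/orP; left; rewrite (coefK_nz hP) -me (maxn_idPl (ltnW h)).
move: hfeas; rewrite (INF hP hQ nzc) => hfeas.
have [d0 hb] := core_all nzc hfeas N.
have [h1 h2 h3] := H_top N hP hQ.
rewrite [Hseq P Q N]surjective_pairing (INF h1 h2); last first.
  by move: h3 d0; case: (vseq _ _ N) => u w [_ ->] /= ->; rewrite orbT.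
move: h3 d0 hb; case: (vseq _ _ N) => u w [-> ->] /= d0 hb.
by rewrite /val2 d0; exact: hb.
Qed.
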